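(* Let $E\subset\mathbb{Q}_p$ be a non-empty finite set and $\nu=\sum_{x\in E}\alpha_x\delta_x$ with $\alpha_x\in\mathbb{Z}\setminus\{0\}$. If $\xi\in\mathbb{Q}_p\setminus\{0\}$ satisfies $\widehat\nu(\xi)=0$, then for every $x\in E$ there exists $x'\in E$ with $x'\neq x$ and $|x-x'|_p\le p/|\xi|_p$.
   Context: $\chi(x)=e^{2\pi i\{x\}}$ with $\{x\}$ the $p$-adic fractional part of $x$; $\widehat\nu(\xi)=\sum_{x\in E}\alpha_x\overline{\chi(\xi x)}$. *)

(* Defs.v *)
From Stdlib Require Import Reals ClassicalEpsilon.
From HB Require Import structures.
From mathcomp Require Import all_boot all_order all_algebra.
From mathcomp Require Import Rstruct ring.
Set Implicit Arguments. Unset Strict Implicit. Unset Printing Implicit Defensive.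
Import Order.TTheory GRing.Theory Num.Theory.
Local Open Scope ring_scope.

Definition ppow (p n : nat) : int := ((p ^ n)%N)%:Z.

(* ---------- p-adic integers Z_p as coherent sequences ----------
   a = lim a_n, with a_{n+1} = a_n mod p^n, so that a - a_n \in p^n Z_p. *)
Record Zp (p : nat) := MkZp {
  zseq :> nat -> int;
  zcompat : forall n, (zseq n.+1 == zseq n %[mod ppow p n])%Z }.

Lemma zlin_compat p (c d : int) (a b : Zp p) n :
  ((c * a n.+1 + d * b n.+1) == (c * a n + d * b n) %[mod ppow p n])%Z.
Proof.
rewrite eqz_mod_dvd.
have ha := zcompat a n; have hb := zcompat b n.
rewrite eqz_mod_dvd in ha; rewrite eqz_mod_dvd in hb.
have -> : c * a n.+1 + d * b n.+1 - (c * a n + d * b n)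
        = c * (a n.+1 - a n) + d * (b n.+1 - b n) by ring.
by rewrite rpredD // dvdz_mull.
Qed.

Definition zlin p (c d : int) (a b : Zp p) : Zp p :=
  MkZp (zlin_compat c d a b).

Lemma zmul_compat p (a b : Zp p) n :
  ((a n.+1 * b n.+1) == (a n * b n) %[mod ppow p n])%Z.
Proof.
rewrite eqz_mod_dvd.
have ha := zcompat a n; have hb := zcompat b n.
rewrite eqz_mod_dvd in ha; rewrite eqz_mod_dvd in hb.
have -> : a n.+1 * b n.+1 - a n * b n
        = a n.+1 * (b n.+1 - b n) + (a n.+1 - a n) * b n by ring.
by apply: rpredD; [exact: dvdz_mull | exact: dvdz_mulr].
Qed.

Definition zmul p (a b : Zp p) : Zp p := MkZp (zmul_compat a b).

(* ---------- p-adic numbers Q_p : x = a / p^k with a in Z_p ---------- *)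
Record Qp (p : nat) := MkQp { qk : nat; qa : Zp p }.

(* equality of p-adic numbers (setoid equality on representations):
   p^{k_y} a_x = p^{k_x} a_y in Z_p *)
Definition qp_eq p (x y : Qp p) : Prop :=
  forall n, ((ppow p (qk y) * qa x n) == (ppow p (qk x) * qa y n)
             %[mod ppow p n])%Z.

Lemma zzero_compat p n : ((0 : int) == 0 %[mod ppow p n])%Z.
Proof. by []. Qed.
Definition qp0 p : Qp p := MkQp 0 (MkZp (@zzero_compat p)).

Definition qp_mul p (x y : Qp p) : Qp p :=
  MkQp (qk x + qk y) (zmul (qa x) (qa y)).

(* x - y = (p^{k_y} a_x - p^{k_x} a_y) / p^{k_x + k_y} *)
Definition qp_sub p (x y : Qp p) : Qp p :=
  MkQp (qk x + qk y) (zlin (ppow p (qk y)) (- ppow p (qk x)) (qa x) (qa y)).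

(* p-adic absolute value.  For a in Z_p, the least m with a_m <> 0 mod p^m
   is v_p(a) + 1; so |a/p^k|_p = p^k / p^(m-1); and |0|_p = 0. *)
Definition notdiv p (a : Zp p) : pred nat :=
  fun m => ~~ (ppow p m %| a m)%Z.

Definition qp_abs p (x : Qp p) : R :=
  match excluded_middle_informative (exists m, notdiv (qa x) m) with
  | left h => ((p%:R : R) ^+ qk x) / ((p%:R : R) ^+ (ex_minn h).-1)
  | right _ => 0
  end.

Definition qp_frac p (x : Qp p) : R :=
  ((qa x (qk x) %% ppow p (qk x))%Z)%:~R / ((p%:R : R) ^+ qk x).

(* complex numbers as pairs (real part, imaginary part) *)
Definition chi p (x : Qp p) : R * R :=
  (cos (2 * PI * qp_frac x), sin (2 * PI * qp_frac x)).

(* Fourier transform of nu = sum_i alpha_i delta_{x_i}: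
   hat nu(xi) = sum_i alpha_i * conj(chi(xi x_i)) *)
Definition nu_hat p (n : nat) (x : 'I_n -> Qp p) (alpha : 'I_n -> int)
  (xi : Qp p) : R * R :=
  (\sum_(i < n) (alpha i)%:~R * (chi (qp_mul xi (x i))).1,
   \sum_(i < n) (alpha i)%:~R * (- (chi (qp_mul xi (x i))).2)).

(* Main.v *)
Require Import Defs.
From Stdlib Require Import Reals ClassicalEpsilon.
From mathcomp Require Import all_boot all_order all_algebra.
From mathcomp Require Import Rstruct.
From mathcomp Require Import all_field ring zify.
From mathcomp Require Import complex.
Import Order.TTheory GRing.Theory Num.Theory.
Local Open Scope ring_scope.

Definition Gp (p q : nat) : {poly rat} := \sum_(j < p) 'X^(j * q).

Lemma hornerG (F : numFieldType) (p q : nat) (u : F) :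
  (map_poly ratr (Gp p q)).[u] = \sum_(j < p) (u ^+ q) ^+ j.
Proof.
rewrite /Gp rmorph_sum horner_sum; apply: eq_bigr => j _.
by rewrite /= map_polyXn hornerXn -exprM mulnC.
Qed.

Lemma pK_eq p K : (0 < K)%N -> (p ^ K = p ^ K.-1 * p)%N.
Proof. by case: K => // K _; rewrite expnS mulnC. Qed.

Lemma G_root (F : numFieldType) p K (u : F) : (0 < K)%N ->
  u ^+ (p ^ K) = 1 -> u ^+ (p ^ K.-1) != 1 ->
  root (map_poly ratr (Gp p (p ^ K.-1))) u.
Proof.
move=> K0 uN uq; rewrite /root hornerG.
have := subrX1 (u ^+ (p ^ K.-1)) p.
rewrite -exprM -pK_eq // uN subrr => /esym /eqP; rewrite mulf_eq0.
by rewrite subr_eq0 (negbTE uq).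
Qed.

Lemma G_root_prim p K (u : algC) : prime p -> (0 < K)%N ->
  root (map_poly ratr (Gp p (p ^ K.-1))) u -> (p ^ K).-primitive_root u.
Proof.
move=> pp K0; rewrite /root hornerG => /eqP S0.
have uq : u ^+ (p ^ K.-1) != 1.
  apply/eqP => uq1; move: S0; rewrite uq1.
  under eq_bigr do rewrite expr1n.
  rewrite sumr_const card_ord => /eqP; rewrite pnatr_eq0.
  by move/eqP => p0; rewrite p0 in pp.
have uN : u ^+ (p ^ K) = 1.
  have := subrX1 (u ^+ (p ^ K.-1)) p.
  by rewrite -exprM -pK_eq // S0 mulr0 => /eqP; rewrite subr_eq0 => /eqP.
have [d dprim dN] := prim_order_exists (n:=(p ^ K)%N) (ltac:(by rewrite expn_gt0 prime_gt0)) uN.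
have [m mK dm] := dvdn_pfactor d K pp dN.
have mK' : m = K.
  apply/eqP; rewrite eqn_leq mK /=; rewrite leqNgt; apply/negP => mlt.
  move: uq; rewrite -(prim_order_dvd dprim) dm dvdn_exp2l //.
  by move: mlt; case: (K) K0 => // K1 _; rewrite ltnS.
by rewrite -mK' -dm.
Qed.

Lemma size_G_le p q : (size (Gp p q) <= (p.-1 * q).+1)%N.
Proof.
apply/leq_sizeP => i hi; rewrite /Gp coef_sum big1 // => j _.
rewrite coefXn; case: eqP => // ei; exfalso; move: hi; rewrite ei.
have jp : (j <= p.-1)%N by have := ltn_ord j; lia.
have := leq_mul2r q j p.-1; rewrite jp orbT; lia.
Qed.

Lemma core (F : numFieldType) p K (z : F) (P : {poly rat}) :
  prime p -> (0 < K)%N -> z ^+ (p ^ K) = 1 -> z ^+ (p ^ K.-1) != 1 ->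
  root (map_poly ratr P) z ->
  (Gp p (p ^ K.-1) %| P) /\ size (Gp p (p ^ K.-1)) = (p.-1 * p ^ K.-1).+1.
Proof.
move=> pp K0 zN zq hP; set q := (p ^ K.-1)%N; set G := Gp p q.
have G0 : G != 0.
  apply/eqP => G0; have : G.[1] = 0 by rewrite G0 horner0.
  rewrite /G /Gp horner_sum; under eq_bigr do rewrite hornerXn expr1n.
  rewrite sumr_const card_ord => /eqP; rewrite pnatr_eq0 => /eqP p0.
  by rewrite p0 in pp.
set g := gcdp P G.
have gz : root (map_poly ratr g) z.
  by rewrite gcdp_map root_gcd hP G_root.
have g0 : g != 0 by rewrite gcdp_eq0 negb_and G0 orbT.
have sg : (1 < size g)%N.
  rewrite -(size_map_poly (ratr : {rmorphism rat -> F})).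
  by apply: root_size_gt1 gz; rewrite map_poly_eq0.
have [u hu] : exists u : algC, root (map_poly ratr g) u.
  by apply/closed_rootP; rewrite size_map_poly; case: (size g) sg => // [[]].
have uG : root (map_poly ratr G) u by move: hu; rewrite gcdp_map root_gcd => /andP[].
have uprim := G_root_prim _ _ _ pp K0 uG.
have [pf [Dpf _] dvpf] := minCpolyP u.
have pfg : pf %| g by rewrite -dvpf.
have spf : size pf = (p.-1 * q).+1.
  rewrite -(size_map_poly (ratr : {rmorphism rat -> algC})) -Dpf.
  by rewrite (minCpoly_cyclotomic uprim) size_cyclotomic totient_pfactor.
have sgG : (size g <= size G)%N by apply: dvdp_leq G0 (dvdp_gcdr P G).
have spg : (size pf <= size g)%N by apply: dvdp_leq g0 pfg.
have sG := size_G_le p q.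
have eGs : size G = (p.-1 * q).+1 by apply/eqP; rewrite eqn_leq sG -spf (leq_trans spg).
split=> //.
have eq_gG : g %= G by rewrite -dvdp_size_eqp ?dvdp_gcdr // eqn_leq sgG eGs -spf spg.
by rewrite -(eqp_dvdl _ eq_gG) dvdp_gcdl.
Qed.

Lemma G_mul p q : Gp p q * ('X^q - 1) = 'X^(p * q) - 1.
Proof.
rewrite mulrC (mulnC p) exprM [RHS]subrX1; congr (_ * _).
by rewrite /Gp; apply: eq_bigr => j _; rewrite -exprM mulnC.
Qed.

Lemma periodic p K (P : {poly rat}) : prime p -> (0 < K)%N ->
  (size P <= p ^ K)%N -> Gp p (p ^ K.-1) %| P ->
  size (Gp p (p ^ K.-1)) = (p.-1 * p ^ K.-1).+1 ->
  forall m, (p ^ K.-1 <= m)%N -> (m < p ^ K)%N -> P`_(m - p ^ K.-1) = P`_m.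
Proof.
move=> pp K0 sP /dvdpP [qq Pq] sG m hm1 hm2.
set q := (p ^ K.-1)%N in sG hm1 Pq *.
have eN : (p ^ K = p * q)%N by rewrite pK_eq // mulnC.
have iden : P * ('X^q - 1) = qq * ('X^(p ^ K) - 1) by rewrite Pq -mulrA G_mul eN.
have hp1 : (0 < p)%N by apply: prime_gt0.
have epq : (p.-1 * q + q = p * q)%N by rewrite -[in RHS](prednK hp1) mulSn addnC.
have sqq : (size qq <= q)%N.
  have G0 : Gp p q != 0 by rewrite -size_poly_eq0 sG.
  have [qq0|qq0] := eqVneq qq 0; first by rewrite qq0 size_poly0.
  by move: sP; rewrite Pq size_mul // sG eN -epq addnS /= addnC leq_add2l.
have := congr1 (fun r : {poly rat} => r`_m) iden => /=.
rewrite !mulrBr !mulr1 !coefB !coefMXn ltnNge hm1 /= ltnNge.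
rewrite -ltnNge hm2 /= [qq`_m]nth_default ?(leq_trans sqq hm1) // subrr => /eqP.
by rewrite subr_eq0 => /eqP.
Qed.

Lemma mulC_eq (a b c d : R) : (Complex a b : R[i]) * Complex c d = Complex (a * c - b * d) (a * d + b * c).
Proof. by []. Qed.
Lemma cos0' : cos 0 = 1. Proof. exact: cos_0. Qed.
Lemma sin0' : sin 0 = 0. Proof. exact: sin_0. Qed.
Lemma zeta_exp (t : R) (e : nat) :
  (Complex (cos t) (sin t) : R[i]) ^+ e = Complex (cos (e%:R * t)) (sin (e%:R * t)).
Proof.
rewrite !RmultE; elim: e => [|e IH].
  by rewrite expr0 mulr0n mul0r cos0' sin0'.
rewrite exprSr IH mulC_eq mulrSr mulrDl mul1r -RplusE cos_plus sin_plus.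
rewrite !RealsE; congr Complex; exact: addrC.
Qed.

Lemma ppow_dvd p m n : (m <= n)%N -> (ppow p m %| ppow p n)%Z.
Proof. by move=> hmn; rewrite dvdzE /ppow /= dvdn_exp2l. Qed.

Lemma zcong p (a : Defs.Zp p) m n : (m <= n)%N -> (ppow p m %| a n - a m)%Z.
Proof.
elim: n => [|n IH]; first by rewrite leqn0 => /eqP ->; rewrite subrr dvdz0.
rewrite leq_eqVlt => /orP [/eqP ->|]; first by rewrite subrr dvdz0.
rewrite ltnS => hmn.
have -> : a n.+1 - a m = (a n.+1 - a n) + (a n - a m) by rewrite addrA subrK.
apply: rpredD; last exact: IH.
apply: (dvdz_trans (ppow_dvd p _ _ hmn)).
by rewrite -eqz_mod_dvd zcompat.
Qed.

Lemma val_nat p v w A B : prime p -> (p ^ v %| A)%N -> ~~ (p ^ v.+1 %| A)%N ->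
  (p ^ w %| B)%N -> ~~ (p ^ w.+1 %| B)%N -> ~~ (p ^ (v + w).+1 %| A * B)%N.
Proof.
move=> pp /dvdnP [u ->] hA /dvdnP [u' ->] hB.
have p0 : (0 < p)%N by apply: prime_gt0.
have hu : ~~ (p %| u)%N.
  apply: contra hA => /dvdnP [k ->]; apply/dvdnP; exists k; rewrite expnSr; ring.
have hu' : ~~ (p %| u')%N.
  apply: contra hB => /dvdnP [k ->]; apply/dvdnP; exists k; rewrite expnSr; ring.
have -> : (u * p ^ v * (u' * p ^ w) = (u * u') * p ^ (v + w))%N by rewrite expnD; ring.
rewrite expnSr (mulnC (p ^ (v + w))%N) dvdn_pmul2r ?expn_gt0 ?p0 //.
by rewrite Euclid_dvdM // negb_or hu hu'.
Qed.

Definition rr {p} (xi a : Qp p) : int :=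
  ((qa xi (qk xi + qk a)%N * qa a (qk xi + qk a)%N) %% ppow p (qk xi + qk a)%N)%Z.
Definition er {p} (xi a : Qp p) (K : nat) : nat :=
  (`|rr xi a|%N * p ^ (K - (qk xi + qk a)))%N.

Lemma ppow_neq0 p n : prime p -> ppow p n != 0.
Proof. by move=> pp; rewrite /ppow eqz_nat expn_eq0 negb_and -lt0n prime_gt0.
Qed.

Lemma rr_ge0 p (xi a : Qp p) : prime p -> 0 <= rr xi a.
Proof. by move=> pp; rewrite /rr modz_ge0 // ppow_neq0. Qed.

Lemma sub_mod_dvd (m d : int) : (d %| m - (m %% d)%Z)%Z.
Proof. by rewrite {1}(divz_eq m d) addrK dvdz_mull. Qed.

Lemma val_at p (a : Defs.Zp p) M L : (0 < M)%N -> notdiv a M ->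
  (forall m, (m < M)%N -> ~~ notdiv a m) -> (M <= L)%N ->
  (p ^ M.-1 %| `|a L|)%N /\ ~~ (p ^ M %| `|a L|)%N.
Proof.
move=> M0 hM minM hL; split.
  have h1 : (ppow p M.-1 %| a M.-1)%Z.
    by have := minM M.-1; rewrite /notdiv negbK; apply; rewrite prednK.
  have h2 := zcong _ a _ _ (leq_trans (leq_pred M) hL).
  suff : (ppow p M.-1 %| a L)%Z by rewrite dvdzE.
  have -> : a L = (a L - a M.-1) + a M.-1 by rewrite subrK.
  by apply: rpredD.
apply/negP => h; move: hM; rewrite /notdiv => /negP; apply.
have -> : a M = a L - (a L - a M) by rewrite opprB addrC subrK.
by apply: rpredB; [rewrite dvdzE | apply: zcong _ _ _ _ hL].
Qed.

Lemma powdiv_le (P : R) a b c d : 1 <= P -> (a + d <= c + b)%N ->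
  P ^+ a / P ^+ b <= P ^+ c / P ^+ d.
Proof.
move=> P1 h; have P0 : 0 < P by apply: lt_le_trans P1.
rewrite ler_pdivrMr ?exprn_gt0 // mulrAC ler_pdivlMr ?exprn_gt0 //.
by rewrite -!exprD; apply: ler_weXn2l.
Qed.

Lemma abs_xi p (xi : Qp p) : prime p -> ~ qp_eq xi (qp0 p) ->
  exists Mx, [/\ (0 < Mx)%N, notdiv (qa xi) Mx,
    (forall m, (m < Mx)%N -> ~~ notdiv (qa xi) m) &
    qp_abs xi = (p%:R : R) ^+ qk xi / (p%:R : R) ^+ Mx.-1].
Proof.
move=> pp nz; rewrite /qp_abs; case: excluded_middle_informative => [h|h]; last first.
  exfalso; apply: nz => n; rewrite eqz_mod_dvd /= mulr0 subr0 mul1r.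
  apply/negPn/negP => hn; apply: h; exists n; exact: hn.
case: ex_minnP => M hM minM; exists M; split => //.
- by case: M hM {minM} => //; rewrite /notdiv /ppow expn0 dvd1z.
- by move=> m hm; apply/negP => /minM; rewrite leqNgt hm.
Qed.

Lemma abs_d p (d : Qp p) :
  qp_abs d = 0 \/ exists Md, [/\ (0 < Md)%N, notdiv (qa d) Md,
    (forall m, (m < Md)%N -> ~~ notdiv (qa d) m) &
    qp_abs d = (p%:R : R) ^+ qk d / (p%:R : R) ^+ Md.-1].
Proof.
rewrite /qp_abs; case: excluded_middle_informative => [h|h]; last by left.
right; case: ex_minnP => M hM minM; exists M; split => //.
- by case: M hM {minM} => //; rewrite /notdiv /ppow expn0 dvd1z.
- by move=> m hm; apply/negP => /minM; rewrite leqNgt hm.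
Qed.

Lemma zmulE p (a b : Defs.Zp p) n : zmul a b n = a n * b n.
Proof. by []. Qed.

Lemma ppowD p m n : ppow p (m + n) = ppow p m * ppow p n.
Proof. by rewrite /ppow expnD PoszM. Qed.

Lemma arith1 K x y z : (x + y + z <= K)%N -> (K - (x + y) = (K - (x + y + z)) + z)%N.
Proof. lia. Qed.
Lemma arith2 K x y z : (x + y + z <= K)%N -> (K - (x + z) = (K - (x + y + z)) + y)%N.
Proof. lia. Qed.
Lemma arith3 K S : (0 < S)%N -> (S <= K)%N -> (K.-1 = (K - S) + S.-1)%N.
Proof. lia. Qed.

Lemma er_int p (xi a : Qp p) K : prime p -> (qk xi + qk a <= K)%N ->
  ((er xi a K)%:Z = rr xi a * ppow p (K - (qk xi + qk a))%N)%R.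
Proof.
move=> pp hK; rewrite /er PoszM gez0_abs ?rr_ge0 //.
Qed.

Lemma padic_final p (xi a b : Qp p) (K : nat) : prime p ->
  ~ qp_eq xi (qp0 p) ->
  (qk xi + qk a + qk b <= K)%N -> (0 < K)%N ->
  (er xi a K = er xi b K %[mod p ^ K.-1])%N ->
  qp_abs (qp_sub a b) <= (p%:R : R) / qp_abs xi.
Proof.
move=> pp nz hSK K0 hmod.
set kx := qk xi; set ka := qk a; set kb := qk b.
set S := (kx + ka + kb)%N.
pose Z := zmul (qa xi) (qa (qp_sub a b)).
have hZ : forall L, (L < S)%N -> (ppow p L %| Z L)%Z.
  move=> L hL.
  have S0 : (0 < S)%N by apply: leq_ltn_trans hL.
  pose W := ppow p kb * rr xi a - ppow p ka * rr xi b.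
  have hX : forall c : Qp p, (qk c <= kb + ka)%N ->
      (ppow p (kx + qk c)%N %| qa xi S * qa c S - rr xi c)%Z.
    move=> c hc; rewrite /rr.
    set m := (qa xi (kx + qk c) * qa c (kx + qk c))%R.
    have -> : qa xi S * qa c S - (m %% ppow p (kx + qk c)%N)%Z
        = (qa xi S * qa c S - m) + (m - (m %% ppow p (kx + qk c)%N)%Z) by rewrite addrA subrK.
    apply: rpredD; last exact: sub_mod_dvd.
    have hcS : (kx + qk c <= S)%N by rewrite /S; lia.
    have := zcong _ (zmul (qa xi) (qa c)) _ S hcS; rewrite !zmulE; exact.
  have hW : (ppow p S %| Z S - W)%Z.
    have -> : Z S - W = ppow p kb * (qa xi S * qa a S - rr xi a)
                      - ppow p ka * (qa xi S * qa b S - rr xi b).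
      by rewrite /Z /W /=; ring.
    apply: rpredB.
      have -> : ppow p S = ppow p kb * ppow p (kx + ka)%N
        by rewrite /ppow -PoszM -expnD /S; congr (Posz (p ^ _)); lia.
      by apply: dvdz_mul => //; apply: hX; rewrite /ka; lia.
    have -> : ppow p S = ppow p ka * ppow p (kx + kb)%N
      by rewrite /ppow -PoszM -expnD /S; congr (Posz (p ^ _)); lia.
    by apply: dvdz_mul => //; apply: hX; rewrite /kb; lia.
  have hdiff : ((er xi a K)%:Z - (er xi b K)%:Z = ppow p (K - S)%N * W)%R.
    have hKa : (qk xi + qk a <= K)%N by lia.
    have hKb : (qk xi + qk b <= K)%N by lia.
    rewrite (er_int p xi a K pp hKa) (er_int p xi b K pp hKb).
    rewrite (arith1 _ _ _ _ hSK) (arith2 _ _ _ _ hSK).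
    rewrite (ppowD p _ (qk b)) (ppowD p _ (qk a)) /W /S /kx /ka /kb. ring.
  have hq : (ppow p K.-1 %| ppow p (K - S)%N * W)%Z.
    rewrite -hdiff -eqz_mod_dvd; apply/eqP; rewrite !modz_nat; congr Posz; exact: hmod.
  have hW1 : (ppow p S.-1 %| W)%Z.
    move: hq; have -> : ppow p K.-1 = ppow p (K - S)%N * ppow p S.-1
      by rewrite /ppow -PoszM -expnD; congr (Posz (p ^ _)); rewrite /S /kx /ka /kb in hSK S0 *; lia.
    by rewrite dvdz_mul2l // ppow_neq0.
  have hS1 : (ppow p S.-1 %| Z S)%Z.
    have -> : Z S = (Z S - W) + W by rewrite subrK.
    apply: rpredD => //; apply: dvdz_trans hW; apply: ppow_dvd; exact: leq_pred.
  have -> : Z L = Z S - (Z S - Z L) by rewrite opprB addrC subrK.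
  apply: rpredB; last by apply: zcong; exact: ltnW.
  apply: dvdz_trans hS1; apply: ppow_dvd; rewrite -ltnS prednK //.
have [Mx [Mx0 hMx minMx Ex]] := abs_xi p xi pp nz.
have p1 : (1 <= (p%:R : R)) by rewrite ler1n prime_gt0.
have p0 : (0 < (p%:R : R)) by apply: lt_le_trans p1.
have [->|[Md [Md0 hMd minMd Ed]]] := abs_d p (qp_sub a b).
  by rewrite Ex divr_ge0 ?ler0n // divr_ge0 // exprn_ge0 // ltW.
have hS : (S <= Mx.-1 + Md)%N.
  rewrite leqNgt; apply/negP => hlt.
  have := hZ _ hlt; rewrite dvdzE /Z zmulE abszM /ppow absz_nat.
  have [h1 h2] := val_at p (qa xi) Mx (Mx.-1 + Md) Mx0 hMx minMx ltac:(clear -Md0; lia).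
  have [h3 h4] := val_at p (qa (qp_sub a b)) Md (Mx.-1 + Md) Md0 hMd minMd ltac:(clear -Mx0; lia).
  have := val_nat p _ _ _ _ pp h1 ltac:(by rewrite prednK) h3 ltac:(by rewrite prednK).
  have -> : ((Mx.-1 + Md.-1).+1 = Mx.-1 + Md)%N by clear -Md0; lia.
  by move/negP.
rewrite Ed Ex invf_div mulrA -exprS.
apply: powdiv_le => //; move: hS; rewrite /S /kx /ka /kb /=; clear; lia.
Qed.


Lemma sum_complex n (f g : 'I_n -> R) :
  \sum_(i < n) (Complex (f i) (g i) : R[i]) = Complex (\sum_(i < n) f i) (\sum_(i < n) g i).
Proof.
elim: n f g => [|n IH] f g; first by rewrite !big_ord0.
by rewrite !big_ord_recr /= IH.
Qed.

Lemma intC_mul (a : int) (c s : R) :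
  ((a%:~R : R[i]) * Complex c s) = Complex (a%:~R * c) (a%:~R * s).
Proof.
have -> : (a%:~R : R[i]) = Complex (a%:~R) 0.
  by rewrite -(rmorph_int (real_complex R)).
by rewrite mulC_eq mul0r subr0 mul0r addr0.
Qed.

Lemma mod_ext (P : {poly rat}) N q : (0 < q)%N ->
  (forall m, (q <= m)%N -> (m < N)%N -> P`_(m - q) = P`_m) ->
  forall m, (m < N)%N -> P`_m = P`_(m %% q).
Proof.
move=> q0 hrel m; elim/ltn_ind: m => m IH hm.
case: (ltnP m q) => hmq; first by rewrite modn_small.
rewrite -hrel // IH; last by apply: leq_ltn_trans (leq_subr _ _) hm.
  by rewrite -{2}(subnK hmq) modnDr.
by rewrite ltn_subrL q0 /=; apply: leq_trans hmq.
Qed.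

Lemma find_j n (e : 'I_n -> nat) (al : 'I_n -> int) (N q : nat) (P : {poly rat}) :
  (0 < q)%N -> (q + q <= N)%N -> (forall i, (e i < N)%N) -> (forall i, al i != 0) ->
  (forall m, P`_m = \sum_(i < n) (al i)%:~R * (m == e i)%:R) ->
  (forall m, (m < N)%N -> P`_m = P`_(m %% q)) ->
  forall i0, exists j, j != i0 /\ (e j = e i0 %[mod q])%N.
Proof.
move=> q0 h2q elt al0 hc hmod i0.
case: (boolP [exists j, (j != i0) && (e j == e i0)]) => [/existsP [j /andP [hj /eqP ej]]|hnone].
  by exists j; rewrite ej.
have hn : forall j, j != i0 -> (e i0 == e j) = false.
  move=> j hj; apply/negP => /eqP ej; move/existsP: hnone; apply; exists j.
  by rewrite hj ej eqxx.
have ce : P`_(e i0) = (al i0)%:~R.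
  rewrite hc (bigD1 i0) //= eqxx mulr1 big1 ?addr0 // => j hj.
  by rewrite hn // mulr0.
set e' := if (q <= e i0)%N then (e i0 %% q)%N else (e i0 + q)%N.
have he'lt : (e' < N)%N.
  rewrite /e'; case: ifP => hq.
    by apply: leq_ltn_trans (leq_mod _ _) (elt i0).
  by move/negbT: hq; rewrite -ltnNge => hq; apply: leq_trans h2q; rewrite ltn_add2r.
have he'mod : (e' %% q = e i0 %% q)%N.
  by rewrite /e'; case: ifP => _; [rewrite modn_mod | rewrite modnDr].
have he'ne : e' != e i0.
  rewrite /e'; case: ifP => hq.
    by rewrite neq_ltn; apply/orP; left; apply: leq_trans hq; rewrite ltn_mod.
  by rewrite -{2}(addn0 (e i0)) eqn_add2l -lt0n.
have ce' : P`_e' != 0.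
  rewrite hmod // he'mod -hmod // ce intr_eq0; exact: al0.
case: (boolP [exists j, e j == e']) => [/existsP [j /eqP ej]|hno].
  exists j; split; last by rewrite ej.
  by apply: contraNneq he'ne => ji; rewrite -ej ji.
exfalso; move/negP: ce'; apply; rewrite hc big1 // => j _.
case: eqP => [ej|]; last by rewrite mulr0.
by exfalso; move/existsP: hno; apply; exists j; rewrite ej.
Qed.


Definition th (p K : nat) : R := IZR 2 * PI / ((p ^ K)%N)%:R.

Lemma zeta_exp' (t : R) (e : nat) :
  (Complex (cos t) (sin t) : R[i]) ^+ e = Complex (cos (GRing.mul e%:R t)) (sin (GRing.mul e%:R t)).
Proof. by rewrite zeta_exp !RmultE. Qed.

Lemma posz_natr (m : nat) : ((Posz m)%:~R : R) = m%:R.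
Proof. by []. Qed.

Lemma hfrac_lem p (xi y : Qp p) K : prime p -> (qk xi + qk y <= K)%N ->
  Rmult (Rmult (IZR 2) PI) (qp_frac (qp_mul xi y)) = GRing.mul (er xi y K)%:R (th p K).
Proof.
move=> pp hk.
have -> : qp_frac (qp_mul xi y) = (rr xi y)%:~R / (p%:R : R) ^+ (qk xi + qk y)%N by [].
rewrite -(gez0_abs (rr_ge0 p xi y pp)) posz_natr !RmultE /th /er.
have -> : (p ^ K = p ^ (qk xi + qk y) * p ^ (K - (qk xi + qk y)))%N by rewrite -expnD subnKC.
have p0 : (p%:R : R) != 0 by rewrite pnatr_eq0 -lt0n prime_gt0.
rewrite !natrM !natrX !RealsE. field.
by rewrite !expf_neq0.
Qed.

Lemma cos_lt1 p : prime p -> cos (IZR 2 * PI / p%:R) < 1.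
Proof.
move=> pp.
have p2 : (2 <= p)%N by apply: prime_gt1.
have PI0 : 0 < PI by apply/RltP; exact: PI_RGT_0.
have hx : 0 < IZR 2 * PI / p%:R.
  rewrite divr_gt0 ?ltr0n ?prime_gt0 // mulr_gt0 //; apply/RltP; exact: Rlt_0_2.
have hxPI : IZR 2 * PI / p%:R <= PI.
  rewrite ler_pdivrMr ?ltr0n ?prime_gt0 // [PI * _]mulrC ler_pM2r //.
  have -> : IZR 2 = 2%:R by rewrite RealsE.
  by rewrite ler_nat.
rewrite -[X in _ < X]cos0'; apply/RltP; apply: cos_decreasing_1.
- exact: Rle_refl.
- by apply/RleP; exact: ltW.
- by apply/RleP; exact: ltW.
- by apply/RleP.
- by apply/RltP.
Qed.

Lemma coefP n (e : 'I_n -> nat) (al : 'I_n -> int) m :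
  (\sum_(i < n) (al i)%:~R *: 'X^(e i) : {poly rat})`_m = \sum_(i < n) (al i)%:~R * (m == e i)%:R.
Proof. by rewrite coef_sum; apply: eq_bigr => i _; rewrite coefZ coefXn. Qed.

Theorem mainTheorem6 (p : nat) (hp : prime p)
  (n : nat) (x : 'I_n -> Qp p) (alpha : 'I_n -> int) (xi : Qp p) :
  (0 < n)%N ->
  (forall i j : 'I_n, i != j -> ~ qp_eq (x i) (x j)) ->
  (forall i, alpha i != 0) ->
  ~ qp_eq xi (qp0 p) ->
  nu_hat x alpha xi = (0, 0) ->
  forall i : 'I_n, exists j : 'I_n,
    ~ qp_eq (x j) (x i) /\
    qp_abs (qp_sub (x i) (x j)) <= (p%:R : R) / qp_abs xi.
Proof.
move=> n0 hdist hal hxi hnu i0.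
have [M hM] : exists M, forall i, (qk (x i) <= M)%N.
  by exists (\max_(i < n) qk (x i))%N => i; exact: (leq_bigmax (F := fun i => qk (x i))).
have [K [hK K0]] : exists K, (forall i j, (qk xi + qk (x i) + qk (x j) <= K)%N) /\ (0 < K)%N.
  exists (qk xi + M + M).+1; split=> // i j; have := hM i; have := hM j; lia.
have hK1 : forall i, (qk xi + qk (x i) <= K)%N by move=> i; have := hK i i; lia.
have p1 : (1 < p)%N by apply: prime_gt1.
have elt : forall i, (er xi (x i) K < p ^ K)%N.
  move=> i; rewrite /er.
  have hr : (`|rr xi (x i)| < p ^ (qk xi + qk (x i)))%N.
    rewrite -ltz_nat gez0_abs ?rr_ge0 //; apply: ltz_pmod.
    by rewrite /ppow ltz_nat expn_gt0 prime_gt0.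
  rewrite -{2}(subnKC (hK1 i)) expnD ltn_pmul2r // expn_gt0 prime_gt0 //.
pose z : R[i] := Complex (cos (th p K)) (sin (th p K)).
pose P : {poly rat} := \sum_(i < n) (alpha i)%:~R *: 'X^(er xi (x i) K).
case: hnu => H1 H2.
have H1' : \sum_(i < n) (alpha i)%:~R * cos (GRing.mul (er xi (x i) K)%:R (th p K)) = 0.
  rewrite -[X in _ = X]H1; apply: eq_bigr => i _; congr (_ * _).
  by rewrite /chi /= (hfrac_lem p xi (x i) K hp (hK1 i)).
have H2' : \sum_(i < n) (alpha i)%:~R * sin (GRing.mul (er xi (x i) K)%:R (th p K)) = 0.
  apply/eqP; rewrite -oppr_eq0 -sumrN; apply/eqP; rewrite -[X in _ = X]H2; apply: eq_bigr => i _.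
  by rewrite /chi /= (hfrac_lem p xi (x i) K hp (hK1 i)) // mulrN.
have hroot : root (map_poly ratr P) z.
  rewrite /root /P rmorph_sum horner_sum.
  under eq_bigr => i _ do rewrite /= map_polyZ map_polyXn hornerZ hornerXn rmorph_int /z zeta_exp' intC_mul.
  by rewrite sum_complex H1' H2'.
have zN : z ^+ (p ^ K) = 1.
  rewrite /z zeta_exp'.
  have -> : GRing.mul ((p ^ K)%N)%:R (th p K) = Rmult (IZR 2) PI.
    have hN : (p ^ K)%N%:R != 0 :> R by rewrite pnatr_eq0 expn_eq0 negb_and -lt0n prime_gt0.
    rewrite /th !RealsE; field; exact: hN.
  by rewrite cos_2PI sin_2PI.
have zq : z ^+ (p ^ K.-1) != 1.
  rewrite /z zeta_exp'.
  have -> : GRing.mul ((p ^ K.-1)%N)%:R (th p K) = Rdiv (Rmult (IZR 2) PI) p%:R.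
    have hN : (p ^ K.-1)%N%:R != 0 :> R by rewrite pnatr_eq0 expn_eq0 negb_and -lt0n prime_gt0.
    have hp0 : p%:R != 0 :> R by rewrite pnatr_eq0 -lt0n prime_gt0.
    rewrite /th !RealsE (pK_eq p K K0) natrM; field; rewrite hN hp0 //.
  apply/negP => /eqP [] /eqP; rewrite lt_eqF //; exact: cos_lt1.
have [GP sG] := core _ p K z P hp K0 zN zq hroot.
have sP : (size P <= p ^ K)%N.
  apply/leq_sizeP => m hm; rewrite coefP big1 // => i _.
  by rewrite (_ : (m == er xi (x i) K) = false) ?mulr0 //; apply/negbTE; rewrite neq_ltn (leq_trans (elt i) hm) orbT.
have hper := periodic p K P hp K0 sP GP sG.
have q0 : (0 < p ^ K.-1)%N by rewrite expn_gt0 prime_gt0.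
have hmod := mod_ext P (p ^ K) (p ^ K.-1) q0 hper.
have h2q : (p ^ K.-1 + p ^ K.-1 <= p ^ K)%N.
  by rewrite (pK_eq p K K0) addnn -mul2n mulnC leq_mul2l p1 orbT.
have [j [ji hj]] := find_j n (fun i => er xi (x i) K) alpha (p ^ K) (p ^ K.-1) P q0 h2q elt hal (coefP _ _ _) hmod i0.
exists j; split; first by apply: hdist.
by apply: (padic_final p xi (x i0) (x j) K hp hxi (hK i0 j) K0); rewrite hj.
Qed.
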